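(* Let $R$ be a suitable ring, and let $x_1,x_2,x_3\in R$ satisfy $x_1+x_2+x_3=1$, where $x_1$ is an idempotent. Then there exist pairwise orthogonal idempotents $e_1\in Rx_1$, $e_2\in Rx_2$, $e_3\in Rx_3$ such that $e_1+e_2+e_3=1$ and $x_1\sim e_1$.
   Context: A ring $R$ (associative with $1$) is suitable if whenever $x+y=1$ in $R$ there are orthogonal idempotents $e\in Rx$ and $f\in Ry$ with $e+f=1$. For idempotents $e,e'\in R$, write $e\sim e'$ ($e$ and $e'$ are left strongly isomorphic) if $e'e=e'$ and $ee'=e$. *)

(* Defs.v *)
From mathcomp Require Import all_boot all_algebra.
Set Implicit Arguments. Unset Strict Implicit. Unset Printing Implicit Defensive.
Import GRing.Theory.
Local Open Scope ring_scope.

Definition idem (R : pzRingType) (e : R) : Prop := e * e = e.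

Definition in_left_ideal (R : pzRingType) (a x : R) : Prop := exists r : R, a = r * x.

Definition orth (R : pzRingType) (e f : R) : Prop := e * f = 0 /\ f * e = 0.

Definition suitable (R : pzRingType) : Prop :=
  forall x y : R, x + y = 1 ->
    exists e f : R, [/\ idem e /\ idem f, in_left_ideal e x, in_left_ideal f y,
                       orth e f & e + f = 1].

Definition lsiso (R : pzRingType) (e e' : R) : Prop := e' * e = e' /\ e * e' = e.

(* Main.v *)
Require Import Defs.
From mathcomp Require Import all_boot all_algebra.
Local Open Scope ring_scope.
Import GRing.Theory.

Theorem lemma2 (R : pzRingType) (x1 x2 x3 : R) :
  suitable R -> x1 + x2 + x3 = 1 -> idem x1 ->
  exists e1 e2 e3 : R,
    [/\ idem e1 /\ idem e2 /\ idem e3,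
        in_left_ideal e1 x1 /\ in_left_ideal e2 x2 /\ in_left_ideal e3 x3,
        orth e1 e2 /\ orth e1 e3 /\ orth e2 e3,
        e1 + e2 + e3 = 1 & lsiso x1 e1].
Proof.
move=> hS hsum hp.
set p := x1 in hsum hp *.
set q := 1 - p.
have pp : p * p = p by [].
have qq : q * q = q by rewrite /q mulrBl mul1r mulrBr mulr1 pp subrr subr0.
have pq : p * q = 0 by rewrite /q mulrBr mulr1 pp subrr.
have qp : q * p = 0 by rewrite /q mulrBl mul1r pp subrr.
have x23 : x2 + x3 = q.
  by apply: (addrI p); rewrite addrA hsum /q addrC subrK.
have qxq : q * x2 * q + q * x3 * q = q by rewrite -mulrDl -mulrDr x23 !qq.
have [e [e' [[[ie ie'] [r er] [s es] [ee' e'e] ee]]]] :=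
  hS (q * x2 * q) (1 - q * x2 * q) (ltac:(by rewrite addrC subrK)).
have eq_ : e * q = e by rewrite er -!mulrA qq.
set f := q * e * q.
set g := q * e' * q.
have fg : f + g = q by rewrite /f /g -mulrDl -mulrDr ee mulr1 qq.
have gE : g = q - f by rewrite -fg (addrC f) addrK.
have qf : q * f = f by rewrite /f !mulrA qq.
have fq : f * q = f by rewrite /f -mulrA qq.
have fE : f = q * e by rewrite /f -mulrA eq_.
have ff : f * f = f by rewrite fE mulrA -(mulrA q e q) eq_ -mulrA ie.
have fg0 : f * g = 0 by rewrite gE (mulrBr f q f) fq ff subrr.
have gf0 : g * f = 0 by rewrite gE (mulrBl f q f) qf ff subrr.
have qg : q * g = g by rewrite gE (mulrBr q q f) qq qf.
have gq : g * q = g by rewrite gE (mulrBl q q f) qq fq.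
have gg : g * g = g by rewrite {2}gE (mulrBr g q f) gq gf0 subr0.

set h := q * r * q * x2.
set k := q * s * q * x3.
have hq : h * q = f.
  by rewrite fE er !mulrA.
have aux : (1 - q * x2 * q) * q = q * x3 * q.
  by rewrite (mulrBl q 1 (q * x2 * q)) mul1r -(mulrA _ q q) qq -{1}qxq (addrC (q * x2 * q)) addrK.
have kq : k * q = g.
  by rewrite /k /g es -(mulrA q s) -(mulrA q (s * _)) -(mulrA s) aux !mulrA.
have hf : h * f = f by rewrite -qf mulrA hq ff.
have kg : k * g = g by rewrite -qg mulrA kq gg.
set e2 := f * h.
set e3 := g * k.
have i2 : e2 * e2 = e2 by rewrite /e2 mulrA -(mulrA f h f) hf ff.
have i3 : e3 * e3 = e3 by rewrite /e3 mulrA -(mulrA g k g) kg gg.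
have o23 : e2 * e3 = 0.
  by rewrite /e2 /e3 -qg (mulrA (f*h) (q*g) k) (mulrA (f*h) q g) -(mulrA f h q) hq ff fg0 mul0r.
have o32 : e3 * e2 = 0.
  by rewrite /e3 /e2 -qf (mulrA (g*k) (q*f) h) (mulrA (g*k) q f) -(mulrA g k q) kq gg gf0 mul0r.
have qe2 : q * e2 = e2 by rewrite /e2 mulrA qf.
have qe3 : q * e3 = e3 by rewrite /e3 mulrA qg.
have e2q : e2 * q = f by rewrite /e2 -mulrA hq ff.
have e3q : e3 * q = g by rewrite /e3 -mulrA kq gg.
set G := e2 + e3.
have GG : G * G = G by rewrite /G mulrDl !mulrDr i2 i3 o23 o32 addr0 add0r.
have Gq : G * q = q by rewrite /G mulrDl e2q e3q fg.
have pG : p * G = 0 by rewrite -[G]/(e2 + e3) -qe2 -qe3 -mulrDr mulrA pq mul0r.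
have G2 : G * e2 = e2 by rewrite /G mulrDl i2 o32 addr0.
have G3 : G * e3 = e3 by rewrite /G mulrDl o23 i3 add0r.
have e2G : e2 * G = e2 by rewrite /G mulrDr i2 o23 addr0.
have e3G : e3 * G = e3 by rewrite /G mulrDr o32 i3 add0r.
have Gp : G * p = G - q.
  have -> : p = 1 - q by rewrite /q opprB addrC subrK.
  by rewrite mulrBr mulr1 Gq.
exists (1 - G), e2, e3.
have e1p : (1 - G) * p = 1 - G.
  have pq1 : p + q = 1 by rewrite /q addrC subrK.
  by rewrite (mulrBl p 1 G) mul1r Gp opprB addrA pq1.
split.
- split; first by rewrite /idem (mulrBl (1-G) 1 G) mul1r (mulrBr G 1 G) mulr1 GG subrr subr0.
  by split.
- split; first by exists (1 - G).
  split; first by exists (f * q * r * q); rewrite /e2 /h !mulrA.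
  by exists (g * q * s * q); rewrite /e3 /k !mulrA.
- split; first by split; rewrite ?mulrBl ?mulrBr ?mul1r ?mulr1 ?G2 ?e2G subrr.
  split; first by split; rewrite ?mulrBl ?mulrBr ?mul1r ?mulr1 ?G3 ?e3G subrr.
  by split.
- by rewrite /G -addrA subrK.
- by split; rewrite // mulrBr mulr1 pG subr0.
Qed.
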